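(* Let $(\Omega,\mathcal G,\alpha)$ be a dynamical system and let $\omega\in\Omega$ be a non-isolated point whose orbit $\{\alpha(g)(\omega):g\in\mathcal G\}$ is dense in $\Omega$. Then $\omega$ is pseudoergodic.
   Context: $(\mathcal G,+)$ is a countable discrete group (written additively, not necessarily abelian). A dynamical system $(\Omega,\mathcal G,\alpha)$ consists of a compact metric space $\Omega$ and a map $\alpha$ from $\mathcal G$ to the homeomorphisms of $\Omega$ with $\alpha(g+h)=\alpha(g)\circ\alpha(h)$. A sequence $(g_n)$ satisfies $g_n\to\infty$ if it eventually leaves every finite subset of $\mathcal G$. $L(\omega)=\{\nu\in\Omega:\exists (g_n),\ g_n\to\infty,\ \alpha(g_n)(\omega)\to\nu\}$; $\omega$ is pseudoergodic if $L(\omega)=\Omega$. *)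

(* Defs.v *)
From HB Require Import structures.
From mathcomp Require Import all_boot all_order all_algebra.
From mathcomp Require Import all_classical all_reals all_analysis.
Set Implicit Arguments. Unset Strict Implicit. Unset Printing Implicit Defensive.
Import Order.TTheory GRing.Theory Num.Theory.
Local Open Scope classical_set_scope.

Definition is_group (G : Type) (add : G -> G -> G) (zero : G) (opp : G -> G) :=
  [/\ forall a b c, add a (add b c) = add (add a b) c,
      forall a, add zero a = a, forall a, add a zero = a,
      forall a, add (opp a) a = zero & forall a, add a (opp a) = zero].

Definition homeomorphism (T : topologicalType) (f : T -> T) :=
  continuous f /\ exists g : T -> T, [/\ continuous g, cancel f g & cancel g f].

Definition is_action (G : Type) (add : G -> G -> G) (T : topologicalType)
  (alpha : G -> T -> T) :=
  (forall g, homeomorphism (alpha g)) /\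
  (forall g h, alpha (add g h) = alpha g \o alpha h).

Definition tends_to_infty (G : eqType) (gs : nat -> G) :=
  forall s : seq G, \forall n \near \oo, gs n \notin s.

Definition Lset (G : eqType) (T : topologicalType) (alpha : G -> T -> T)
  (omega : T) : set T :=
  [set nu | exists gs : nat -> G, tends_to_infty gs /\
      (fun n => alpha (gs n) omega) @ \oo --> nu].

Definition pseudoergodic (G : eqType) (T : topologicalType)
  (alpha : G -> T -> T) (omega : T) := Lset alpha omega = setT.

(* Main.v *)
Require Import Defs.
From HB Require Import structures.
From mathcomp Require Import all_boot all_order all_algebra.
From mathcomp Require Import all_classical all_reals all_analysis.
Import Order.TTheory GRing.Theory Num.Theory.
Local Open Scope classical_set_scope.

Section Aux.
Variables (G : countType) (R : realType) (Omega : metricType R)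
  (alpha : G -> Omega -> Omega) (omega : Omega).
Hypothesis halpha : forall g, homeomorphism (alpha g).
Hypothesis niso : ~ isolated [set: Omega] omega.
Hypothesis dense : closure (range (fun g => alpha g omega)) = [set: Omega].

Lemma orbit_in_open (V : set Omega) : open V -> V !=set0 ->
  exists g, V (alpha g omega).
Proof.
move=> oV [y Vy].
have : closure (range (fun g => alpha g omega)) y by rewrite dense.
move=> /(_ V); case; first by rewrite openE in oV; exact: oV.
by move=> z [[g _ <-] Vz]; exists g.
Qed.

Lemma no_open_singleton (x : Omega) : ~ open [set x].
Proof.
move=> ox.
have [g gx] := @orbit_in_open [set x] ox (ex_intro _ x erefl).
apply: niso; split; first by rewrite in_setT.
exists (alpha g @^-1` [set x]).
  have [cg _] := halpha g.
  apply: (cg omega); rewrite /= gx; rewrite openE in ox; exact: ox.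
apply/seteqP; split => z /=.
  move=> [zx _]; have [_ [h [_ K _]]] := halpha g.
  by rewrite -(K z) zx -gx K.
by move=> ->; split.
Qed.

Lemma key (s : seq Omega) (U : set Omega) : open U -> U !=set0 ->
  open (U `\` [set` s]) /\ (U `\` [set` s]) !=set0.
Proof.
move=> oU U0; elim: s => [|x s [oV V0]].
  split.
    by have -> : U `\` [set` [::]] = U by apply/seteqP; split => z //= [].
  by case: U0 => z Uz; exists z.
have -> : U `\` [set` x :: s] = (U `\` [set` s]) `&` ~` [set x].
  apply/seteqP; split => z /=.
    move=> [Uz]; rewrite in_cons => /negP; rewrite negb_or => /andP[zx zs].
    by split; [split=> //; apply/negP|move=> zx'; rewrite zx' eqxx in zx].
  move=> [[Uz /negP zs] zx]; split => //; rewrite in_cons; apply/negP.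
  by rewrite negb_or zs andbT; apply/eqP.
split.
  apply: openI => //; rewrite -closedC setCK.
  exact/accessible_closed_set1/hausdorff_accessible/metric_hausdorff.
apply/set0P/negP => /eqP E.
apply: (@no_open_singleton x).
have -> : [set x] = U `\` [set` s].
  apply/seteqP; split.
    case: V0 => w Vw.
    have wx : w = x.
      apply: contrapT => wx.
      have : ((U `\` [set` s]) `&` ~` [set x]) w by [].
      by rewrite E.
    by move=> z /= ->; rewrite -wx.
  move=> z Vz /=; apply: contrapT => zx.
  have : ((U `\` [set` s]) `&` ~` [set x]) z by [].
  by rewrite E.
exact: oV.
Qed.

End Aux.

Theorem lemma3p5 (G : countType) (add : G -> G -> G) (zero : G) (opp : G -> G)
  (R : realType) (Omega : metricType R) (alpha : G -> Omega -> Omega)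
  (omega : Omega) :
  is_group add zero opp ->
  compact [set: Omega] ->
  is_action add alpha ->
  ~ isolated [set: Omega] omega ->
  closure (range (fun g => alpha g omega)) = [set: Omega] ->
  pseudoergodic alpha omega.
Proof.
move=> _ _ [halpha _] niso dense.
rewrite /pseudoergodic; apply/seteqP; split => // nu _.
pose F (n : nat) : seq G := pmap (@unpickle G) (iota 0 n).
have H : forall n, exists g, g \notin F n /\
    ball nu ((n.+1)%:R^-1 : R)%R (alpha g omega).
  move=> n.
  have e0 : ((0 : R) < (n.+1)%:R^-1)%R by rewrite invr_gt0 ltr0n.
  have [oV V0] := @key G R Omega alpha omega halpha niso dense (map (fun g => alpha g omega) (F n)) _
    (@open_interior _ (ball nu ((n.+1)%:R^-1 : R)%R))
    (ex_intro _ nu (@nbhsx_ballx _ _ nu _ e0)).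
  have [g [Vg Ng]] := @orbit_in_open G R Omega alpha omega dense _ oV V0.
  exists g; split; last exact: interior_subset.
  by apply: contra_notN Ng => gF; apply/map_f.
have [gs Hgs] := choice H.
exists gs; split.
  move=> s; exists (\max_(x <- s) pickle x).+1 => // n /= Hn.
  apply/negP => gin; have [+ _] := Hgs n; apply/negP/negPn.
  rewrite /F mem_pmap; apply/mapP; exists (pickle (gs n)); last by rewrite pickleK.
  rewrite mem_iota /= add0n; apply: leq_trans Hn; rewrite ltnS.
  by rewrite (big_rem _ gin) /= leq_maxl.
apply/cvg_ballP => e e0.
have /= := near_infty_natSinv_lt (PosNum e0); apply: filterS => n Hn.
exact: (le_ball (ltW Hn)) ((Hgs n).2).
Qed.
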